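(* Let $0<p<\infty$ and let $m,n\ge1$ be integers. Then there does not exist any continuous map $\tau:\mathbb{R}^m\to\mathbb{R}^n$ such that the composition operator $C_\tau f=f\circ\tau$ is bounded from $L^{p}(\mathbb{R}^n)$ to $L^\infty(\mathbb{R}^m)$.
   Context: $\mathbb{R}^n,\mathbb{R}^m$ carry Lebesgue measure. Boundedness means $\|C_\tau f\|_{L^\infty(\mathbb{R}^m)}\le C\|f\|_{L^{p}(\mathbb{R}^n)}$ for some $C$ and all $f\in L^{p}(\mathbb{R}^n)$. *)

(* Defs.v *)
From HB Require Import structures.
From mathcomp Require Import all_boot all_order all_algebra.
From mathcomp Require Import all_classical all_reals all_analysis.

Set Implicit Arguments.
Unset Strict Implicit.
Unset Printing Implicit Defensive.

Import Order.TTheory GRing.Theory Num.Theory.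
Import numFieldNormedType.Exports.

Local Open Scope classical_set_scope.
Local Open Scope ring_scope.

(* the product of two sigma-finite measures is sigma-finite (the library
   proves this but its instance is shadowed by the subprobability one) *)
Section product_sigma_finite.
Local Open Scope ereal_scope.
Context d1 d2 (T1 : measurableType d1) (T2 : measurableType d2) (R : realType).
Variable m1 : {sigma_finite_measure set T1 -> \bar R}.
Variable m2 : {sigma_finite_measure set T2 -> \bar R}.

Lemma product_measure_sigma_finite' : sigma_finite setT (m1 \x m2).
Proof.
have /sigma_finiteP[F [TF ndF Foo]] := sigma_finiteT m1.
have /sigma_finiteP[G [TG ndG Goo]] := sigma_finiteT m2.
exists (fun n => F n `*` G n).
  rewrite -setXTT TF TG predeqE => -[x y]; split.
    move=> [/= [n _ Fnx] [k _ Gky]]; exists (maxn n k) => //; split.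
    - by move: x Fnx; exact/subsetPset/ndF/leq_maxl.
    - by move: y Gky; exact/subsetPset/ndG/leq_maxr.
  by move=> [n _ []/= ? ?]; split; exists n.
move=> k; have [? ?] := Foo k; have [? ?] := Goo k.
split; first exact: measurableX.
by rewrite product_measure1E// lte_mul_pinfty// ge0_fin_numE.
Qed.

Definition sf_product : {sigma_finite_measure set (T1 * T2)%type -> \bar R} :=
  HB.pack (m1 \x m2)
    (Measure_isSigmaFinite.Build _ _ _ (m1 \x m2) product_measure_sigma_finite').

End product_sigma_finite.

(* The carrier of this measure space is the
   iterated product R * (R * ( ... * unit)); it is identified with the row
   vectors 'rV[R]_n (which carry the Euclidean topology) by [to_rV]. *)
Section Euclidean.
Variable R : realType.

Fixpoint euc_space (n : nat) : {d : measure_display & measurableType d} :=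
  match n with
  | 0 => existT _ _ (Measurable.clone _ unit _)
  | k.+1 => existT _ _ (Measurable.clone _ (measurableTypeR R * projT2 (euc_space k))%type _)
  end.

Definition Rn (n : nat) : measurableType (projT1 (euc_space n)) :=
  projT2 (euc_space n).

Fixpoint leb (n : nat) : {sigma_finite_measure set Rn n -> \bar R} :=
  match n return {sigma_finite_measure set Rn n -> \bar R} with
  | 0 => @dirac _ unit tt R
  | k.+1 => sf_product (@lebesgue_measure R) (leb k)
  end.

Fixpoint to_rV (n : nat) : Rn n -> 'rV[R]_n :=
  match n return Rn n -> 'rV[R]_n with
  | 0 => fun _ => 0
  | k.+1 => fun x => row_mx (const_mx x.1 : 'rV[R]_1) (@to_rV k x.2)
  end.

Definition on_Rn (n : nat) (f : 'rV[R]_n -> R) : Rn n -> R := f \o @to_rV n.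

Definition in_Lp (n : nat) (p : R) (f : 'rV[R]_n -> R) : Prop :=
  measurable_fun setT (on_Rn f) /\
  (Lnorm (leb n) p%:E (EFin \o on_Rn f) < +oo)%E.

Definition Lp_norm (n : nat) (p : R) (f : 'rV[R]_n -> R) : \bar R :=
  Lnorm (leb n) p%:E (EFin \o on_Rn f).

Definition Linf_norm (n : nat) (f : 'rV[R]_n -> R) : \bar R :=
  Lnorm (leb n) +oo%E (EFin \o on_Rn f).

End Euclidean.

(* Main.v *)
Require Import Defs.
From HB Require Import structures.
From mathcomp Require Import all_boot all_order all_algebra.
From mathcomp Require Import all_classical all_reals all_analysis.
From mathcomp Require Import ring lra measurable_realfun.
Import Order.TTheory GRing.Theory Num.Theory.
Import numFieldNormedType.Exports.
Local Open Scope classical_set_scope.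
Local Open Scope ring_scope.

Section S.
Variable R : realType.

Lemma box_meas (k : nat) (y : 'rV[R]_k) (r : R) : 0 < r ->
  measurable (@to_rV R k @^-1` ball y r) /\
  leb R k (@to_rV R k @^-1` ball y r) = (((2 * r) ^+ k)%:E)%E.
Proof.
move=> r0; elim: k y => [|k IH] y.
  have -> : @to_rV R 0 @^-1` ball y r = setT.
    apply/seteqP; split => // x _ /=.
    by split => // i [].

  split => //=. rewrite expr0 diracE in_setT //.
have -> : @to_rV R k.+1 @^-1` ball y r =
   `]y 0 0 - r, y 0 0 + r[%classic `*` (@to_rV R k @^-1` ball (rsubmx (y : 'rV[R]_(1 + k))) r).
  have E0 : (0 : 'I_k.+1) = lshift k (0 : 'I_1) by apply/val_inj.
  apply/seteqP; split => -[x1 x2] /=.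
    move=> [_ H]; split.
      have := H 0 (lshift k (0 : 'I_1)); rewrite (@row_mxEl _ 1 1 k) mxE -E0.
      by rewrite /ball /= ltr_distlC in_itv.
    split => // i j; have := H i (rshift 1 j); rewrite (@row_mxEr _ 1 1 k).
    by rewrite mxE.
  move=> [h1 [_ h2]]; split => // i j.
  case: (@splitP 1 k j) => j' hj.
    have -> : j = lshift k j' :> 'I_(1 + k) by apply/val_inj.
    rewrite (@row_mxEl _ 1 1 k) mxE !ord1 /ball /= ltr_distlC.
    by rewrite -E0; rewrite in_itv /= in h1.
  have -> : j = rshift 1 j' :> 'I_(1 + k) by apply/val_inj.
  rewrite (@row_mxEr _ 1 1 k); have := h2 i j'; by rewrite mxE.
have [mB lB] := IH (rsubmx (y : 'rV[R]_(1 + k))).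
split.
  apply: measurableX => //.
rewrite /= product_measure1E // lB.
have := @lebesgue_measure_itv R `]y 0 0 - r, y 0 0 + r[.
rewrite /= lte_fin ltrBlDr -addrA ltrDl addr_gt0 // => ->.
rewrite -EFinB -EFinM exprS; congr (_%:E); ring.
Qed.
End S.

Theorem proposition5p6 (R : realType) (p : R) (m n : nat) :
  0 < p -> (1 <= m)%N -> (1 <= n)%N ->
  ~ exists tau : 'rV[R]_m -> 'rV[R]_n,
      continuous tau /\
      exists C : R, forall f : 'rV[R]_n -> R, in_Lp p f ->
        (Linf_norm (f \o tau) <= C%:E * Lp_norm p f)%E.
Proof.
move=> p0 m1 n1 [tau [ctau [C HC]]].
pose x0 : 'rV[R]_m := 0.
have key : forall r : R, 0 < r -> 1 <= C * ((2 * r) ^+ n) `^ p^-1.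
  move=> r r0.
  have [d d0 hd] : nbhs_ball x0 (tau @^-1` ball (tau x0) r).
    apply/nbhs_ballP; exact: (ctau x0 _ (nbhsx_ballx (tau x0) r r0)).
  pose f : 'rV[R]_n -> R := \1_(ball (tau x0) r).
  have [mS lS] := @box_meas R n (tau x0) r r0.
  have [mSm lSm] := @box_meas R m x0 d d0.
  have onf : on_Rn f = \1_(@to_rV R n @^-1` ball (tau x0) r).
    by apply/funext => x; rewrite /on_Rn /f /= !indicE.
  have Lpf : Lp_norm p f = (((2 * r) ^+ n) `^ p^-1)%:E.
    rewrite /Lp_norm onf unlock.
    have pn0 : p != 0 by rewrite gt_eqF.
    have E (S : set (Rn R n)) x : (`|(EFin \o \1_S) x| `^ p = (\1_S x)%:E)%E.
      rewrite /= indicE; case: (_ \in _) => /=.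
        by rewrite normr1 powR1.
      by rewrite normr0 powR0.
    under eq_integral => x _ do rewrite E.
    rewrite integral_indic // setIT.
    transitivity (((2 * r) ^+ n)%:E `^ p^-1)%E; last by rewrite poweR_EFin.
    by congr (_ `^ _)%E; exact: lS.
  have Sm0 : (0 < leb R m (@to_rV R m @^-1` ball x0 d))%E.
    by rewrite lSm lte_fin exprn_gt0 // mulr_gt0.
  have Linf : (1 <= Linf_norm (f \o tau))%E.
    rewrite /Linf_norm unlock /=.
    rewrite ifT; last first.
      apply: (lt_le_trans Sm0); apply: le_measure => //; rewrite inE //.
    apply: le_ereal_inf_tmp => y [A [mA A0 sub]].
    rewrite leNgt; apply/negP => y1.
    have : (leb R m (@to_rV R m @^-1` ball x0 d) <= leb R m A)%E.
      apply: le_measure; rewrite ?inE //.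
      move=> x Sx; apply: sub => /=.
      have := hd _ Sx; rewrite /on_Rn /f /= indicE => Bx.
      by rewrite (mem_set Bx) /= normr1 leNgt y1.
    by rewrite A0 leNgt Sm0.
  have Hin : in_Lp p f.
    split; first by rewrite onf; exact: measurable_indic.
    by change (Lp_norm p f < +oo)%E; rewrite Lpf ltry.
  have := le_trans Linf (HC f Hin).
  by rewrite Lpf -EFinM lee_fin.
have [C0|C0] := leP C 0.
  have := key 2^-1 ltac:(by rewrite invr_gt0).
  rewrite mulfV // expr1n powR1 /= mulr1 => h; lra.
set t := (2 * C)^-1 `^ p.
have t0 : 0 < t by apply: powR_gt0; rewrite invr_gt0 mulr_gt0.
set s := Num.min 1 t.
have s0 : 0 < s by rewrite lt_min ltr01 t0.
have s1 : s <= 1 by rewrite ge_min lexx.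
have st : s <= t by rewrite ge_min lexx orbT.
have := key (s / 2) ltac:(by rewrite divr_gt0).
rewrite (_ : 2 * (s / 2) = s); last by field.
have sn : s ^+ n <= s.
  case: n {key HC tau ctau} n1 => // k _.
  rewrite exprS; apply: ler_piMr; [exact: ltW | exact: exprn_ile1 (ltW s0) s1].
have q0 : 0 <= p^-1 by rewrite invr_ge0 ltW.
have h1 : (s ^+ n) `^ p^-1 <= t `^ p^-1.
  apply: ge0_ler_powR => //; last exact: le_trans sn st.
    by rewrite nnegrE exprn_ge0 // ltW.
  by rewrite nnegrE ltW.
have h2 : t `^ p^-1 = (2 * C)^-1.
  by rewrite /t -powRrM mulfV ?gt_eqF // powRr1 // invr_ge0 mulr_ge0 // ltW.
have h3 : C * (2 * C)^-1 = 2^-1 by field; rewrite gt_eqF.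
move=> h; rewrite h2 in h1.
have h4 : C * (s ^+ n) `^ p^-1 <= C * (2 * C)^-1 by rewrite ler_pM2l.
rewrite h3 in h4; have := le_trans h h4; lra.
Qed.
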